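(* Let $K_{m_1,m_2}$ be the complete bipartite graph with bipartition $(X,Y)$, $|X|=m_1$, $|Y|=m_2$, where $2\le m_1\le m_2$, and let $s\ge 2$ be an integer. Then: (1) if $s\le m_2-m_1+2$, then $\kappa^*_{K_{m_1,m_2}}(S)=m_1$ for every $S\subseteq X\cup Y$ with $|S|=s$ and $S\not\subseteq X$; (2) if $2\le s\le m_1$, then $\kappa^*_{K_{m_1,m_2}}(S)=m_2$ for every $S\subseteq X$ with $|S|=s$; (3) if $m_2-m_1+3\le s\le m_1+m_2$, then $\kappa_s^*(K_{m_1,m_2})\ge m_1-\frac{m_1+s-m_2+2}{3}$.
   Context: For $S\subseteq V(G)$ with $|S|\ge 2$, an $S$-Steiner tree of $G$ is a subtree $T$ of $G$ with $S\subseteq V(T)$ all of whose leaves belong to $S$. A family of $S$-Steiner trees $T_1,\dots,T_k$ is completely independent if for all $1\le p<q\le k$: $E(T_p)\cap E(T_q)=\emptyset$, $V(T_p)\cap V(T_q)=S$, and for any two vertices $x_1,x_2\in S$ the $(x_1,x_2)$-paths in $T_p$ and in $T_q$ are internally disjoint. $\kappa^*_G(S)$ is the maximum number of trees in a completely independent family of $S$-Steiner trees in $G$, and $\kappa_s^*(G)=\min\{\kappa^*_G(S): S\subseteq V(G),\ |S|=s\}$. *)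

(* Defs.v *)
From Stdlib Require Import ClassicalEpsilon.
From mathcomp Require Import all_boot all_order all_algebra.
Set Implicit Arguments. Unset Strict Implicit. Unset Printing Implicit Defensive.

Section SteinerDefs.
Variable T : finType.

(* A simple graph on T is given by a symmetric irreflexive adjacency relation
   G; its edges are the 2-sets [set x; y] with G x y.
   A subgraph candidate is a pair (V, E) : vertex set, edge set. *)
Definition subg := ({set T} * {set {set T}})%type.

Definition sg_adj (H : subg) : rel T := fun a b => [set a; b] \in H.2.

Definition is_subtree (G : rel T) (H : subg) : Prop :=
  [/\ (forall f, f \in H.2 -> exists x y, G x y /\ f = [set x; y]),
      (forall f, f \in H.2 -> f \subset H.1),
      H.1 != set0,
      (forall x y, x \in H.1 -> y \in H.1 -> connect (sg_adj H) x y)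
    & #|H.2| + 1 = #|H.1| ].

Definition sg_deg (H : subg) (v : T) : nat := #|[set f in H.2 | v \in f]|.

Definition steiner_tree (G : rel T) (S : {set T}) (H : subg) : Prop :=
  [/\ is_subtree G H, S \subset H.1 &
      forall v, v \in H.1 -> sg_deg H v = 1 -> v \in S].

Definition sg_path (H : subg) (x y : T) (p : seq T) : Prop :=
  [/\ path (sg_adj H) x p, last x p = y & uniq (x :: p)].

Definition int_disjoint (x y : T) (p q : seq T) : Prop :=
  forall v, v \in x :: p -> v \in x :: q -> v = x \/ v = y.

Definition compl_indep_pair (S : {set T}) (H1 H2 : subg) : Prop :=
  [/\ H1.2 :&: H2.2 = set0,
      H1.1 :&: H2.1 = S &
      forall x1 x2 p q, x1 \in S -> x2 \in S ->
        sg_path H1 x1 x2 p -> sg_path H2 x1 x2 q -> int_disjoint x1 x2 p q].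

Definition has_ci_family (G : rel T) (S : {set T}) (k : nat) : Prop :=
  exists F : 'I_k -> subg,
    (forall i, steiner_tree G S (F i)) /\
    (forall i j : 'I_k, (i < j)%N -> compl_indep_pair S (F i) (F j)).

(* Each tree of a family has at
   least one edge (|S| >= 2) and edge sets are pairwise disjoint, so the size
   is < 2 ^ #|T| + 1; the max is taken over that range. *)
Definition kappa_star (G : rel T) (S : {set T}) : nat :=
  \max_(k < (2 ^ #|T|).+1)
     (if excluded_middle_informative (has_ci_family G S k) then val k else 0%N).

Definition kappa_s (G : rel T) (s : nat) : nat :=
  \big[minn/(2 ^ #|T|).+1]_(S : {set T} | #|S| == s) kappa_star G S.

End SteinerDefs.

Definition kbip (m1 m2 : nat) : rel ('I_m1 + 'I_m2)%type :=
  fun u v => match u, v with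
             | inl _, inr _ | inr _, inl _ => true
             | _, _ => false end.

Definition is_left (m1 m2 : nat) (u : ('I_m1 + 'I_m2)%type) : bool :=
  if u is inl _ then true else false.

Definition partX (m1 m2 : nat) : {set ('I_m1 + 'I_m2)%type} :=
  [set u | is_left u].

(* Main.v *)
Require Import Defs.
From mathcomp Require Import all_boot all_order all_algebra.
Import Order.TTheory GRing.Theory Num.Theory.
From mathcomp Require Import zify ring lra.
From Stdlib Require Import ClassicalEpsilon.
Set Implicit Arguments. Unset Strict Implicit. Unset Printing Implicit Defensive.

Lemma two_edges (T : finType) (H : subg T) v e1 e2 : e1 \in H.2 -> e2 \in H.2 -> v \in e1 -> v \in e2 ->
  e1 != e2 -> 2 <= sg_deg H v.
Proof.
move=> h1 h2 v1 v2 ne; rewrite /sg_deg.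
have <- : #|[set e1; e2]| = 2 by rewrite cards2 ne.
by apply: subset_leq_card; apply/subsetP => f; rewrite !inE => /orP[]/eqP->; 
  rewrite ?h1 ?h2 ?v1 ?v2.
Qed.

Lemma path_internal (T : finType) (H : subg T) x y p v : sg_path H x y p ->
  v \in x :: p -> v != x -> v != y -> 2 <= sg_deg H v.
Proof.
case=> pth lst un; rewrite inE => /orP[/eqP-> |vp]; first by rewrite eqxx.
move=> vx vy; case/splitPr: vp pth lst un => p1 p2.
rewrite cat_path last_cat /= => /and3P[_ a1 pth2] lst.
case: p2 pth2 lst => [|n p2]; first by move=> _ /= e; rewrite e eqxx in vy.
move=> pth2 _; move: pth2 => /= /andP[a2 _].
move=> un; have : uniq ((x :: p1) ++ [:: v, n & p2]) by [].
rewrite cat_uniq => /and3P[_ hh /andP[vn _]].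
have lm : last x p1 \in x :: p1 by exact: mem_last.
have lv : last x p1 != v.
  by apply/eqP => e; move: hh; rewrite /= -e lm.
have ln : last x p1 != n.
  by apply/eqP => e; move: hh; rewrite /= -e lm orbT.
apply: (@two_edges _ _ _ [set last x p1; v] [set v; n]) => //.
- by rewrite set22.
- by rewrite set21.
- apply/negP => /eqP e; have : last x p1 \in [set v; n] by rewrite -e set21.
  by rewrite !inE (negbTE lv) (negbTE ln).
Qed.

Section PTree.
Variable T : finType.
Variable G : rel T.
Hypothesis Gsym : symmetric G.

Definition pedges (V : {set T}) (r : T) (par : T -> T) : {set {set T}} :=
  [set [set v; par v] | v in V :\ r].
Definition ptree V r par : subg T := (V, pedges V r par).

Variables (V : {set T}) (r : T) (par : T -> T) (rk : T -> nat).
Hypothesis rV : r \in V.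
Hypothesis parP : forall v, v \in V -> v != r ->
  [/\ par v \in V, G v (par v) & rk (par v) < rk v].

Let H := ptree V r par.

Lemma par_neq v : v \in V -> v != r -> par v != v.
Proof. move=> vV vr; case: (parP vV vr) => _ _ lt; apply/eqP => e.
by rewrite e ltnn in lt. Qed.

Lemma pedges_inj : {in V :\ r &, injective (fun v => [set v; par v])}.
Proof.
move=> v w; rewrite !in_setD1 => /andP[vr vV] /andP[wr wV] e.
have : v \in [set w; par w] by rewrite -e set21.
rewrite !inE => /orP[/eqP //|/eqP vpw].
have : w \in [set v; par v] by rewrite e set21.
rewrite !inE => /orP[/eqP -> //|/eqP wpv].
case: (parP vV vr) => _ _; case: (parP wV wr) => _ _.
by rewrite -vpw -wpv => h1 h2; have := ltn_trans h1 h2; rewrite ltnn.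
Qed.

Lemma sg_adj_sym : symmetric (sg_adj H).
Proof. by move=> a b; rewrite /sg_adj setUC. Qed.

Lemma ptree_edge v : v \in V -> v != r -> sg_adj H v (par v).
Proof. move=> vV vr; rewrite /sg_adj /=; apply/imsetP; exists v => //.
by rewrite in_setD1 vr. Qed.

Lemma ptree_connect_r v : v \in V -> connect (sg_adj H) v r.
Proof.
elim: {v}(rk v) {-2}v (leqnn (rk v)) => [|n IH] v.
  move=> h vV; case: (eqVneq v r) => [-> |vr]; first exact: connect0.
  by case: (parP vV vr) => _ _; rewrite leqn0 in h; rewrite (eqP h).
move=> h vV; case: (eqVneq v r) => [-> |vr]; first exact: connect0.
case: (parP vV vr) => pV _ lt.
apply: connect_trans (connect1 (ptree_edge vV vr)) _.
by apply: IH pV; rewrite -ltnS (leq_trans lt h).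
Qed.

Lemma ptree_subtree : is_subtree G H.
Proof.
split.
- move=> f /imsetP[v]; rewrite in_setD1 => /andP[vr vV] ->.
  by exists v, (par v); case: (parP vV vr).
- move=> f /imsetP[v]; rewrite in_setD1 => /andP[vr vV] ->.
  by case: (parP vV vr) => pV _ _; apply/subsetP => x; rewrite !inE => /orP[]/eqP->.
- by apply/set0Pn; exists r.
- move=> x y xV yV; apply: connect_trans (ptree_connect_r xV) _.
  by rewrite (sym_connect_sym sg_adj_sym); exact: ptree_connect_r.
- rewrite /= /pedges card_in_imset; last exact: pedges_inj.
  by rewrite (cardsD1 r V) rV addnC.
Qed.

Definition has_child v := [exists w in V :\ r, par w == v].

Lemma deg_le1 v : ~~ has_child v -> sg_deg H v <= 1.
Proof.
move=> /existsPn nc; rewrite /sg_deg.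
apply: leq_trans (_ : #|[set [set v; par v]]| <= 1); last by rewrite cards1.
apply: subset_leq_card; apply/subsetP => f; rewrite !inE => /andP[/imsetP[w wVr ->]].
rewrite !inE => /orP[/eqP->//|/eqP pw].
by move: (nc w); rewrite wVr pw eqxx.
Qed.

Lemma deg_ge2 v : 2 <= sg_deg H v -> has_child v.
Proof. by apply: contraTT => /deg_le1; rewrite leqNgt. Qed.


Lemma ptree_steiner (S : {set T}) :
  S \subset V ->
  (forall v, v \in V -> v \notin S ->
     (v != r /\ has_child v) \/
     (v = r /\ exists w1 w2, [/\ w1 \in V :\ r, w2 \in V :\ r, w1 != w2,
                                  par w1 = r & par w2 = r])) ->
  steiner_tree G S H.
Proof.
move=> SV leaf; split=> //; first exact: ptree_subtree.
move=> v vV d1; case: (boolP (v \in S)) => // vS; exfalso.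
suff : 2 <= sg_deg H v by rewrite d1.
case: (leaf v vV vS) => [[vr /existsP[w /andP[wVr /eqP pw]]]|[-> [w1 [w2 [h1 h2 ne p1 p2]]]]].
- apply: (@two_edges _ H v [set v; par v] [set w; par w]).
  + by apply/imsetP; exists v => //; rewrite in_setD1 vr.
  + by apply/imsetP; exists w.
  + by rewrite set21.
  + by rewrite pw set22.
  + apply/negP => /eqP e; have := wVr; rewrite in_setD1 => /andP[wr wV].
    have := pedges_inj _ wVr e; rewrite in_setD1 vr vV => /(_ isT) wv.
    by move: (par_neq wV wr); rewrite pw wv eqxx.
- apply: (@two_edges _ H _ [set w1; par w1] [set w2; par w2]).
  + by apply/imsetP; exists w1.
  + by apply/imsetP; exists w2.
  + by rewrite p1 set22.
  + by rewrite p2 set22.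
  + by apply/negP => /eqP e; move: (pedges_inj h1 h2 e) => ew; rewrite ew eqxx in ne.
Qed.

End PTree.

Lemma ptree_family (T : finType) (G : rel T) (S : {set T}) k
  (Vf : 'I_k -> {set T}) (rf : 'I_k -> T) (pf : 'I_k -> T -> T) (rkf : 'I_k -> T -> nat) :
  (forall i, rf i \in Vf i) ->
  (forall i v, v \in Vf i -> v != rf i ->
     [/\ pf i v \in Vf i, G v (pf i v) & rkf i (pf i v) < rkf i v]) ->
  (forall i, S \subset Vf i) ->
  (forall i v, v \in Vf i -> v \notin S ->
     (v != rf i /\ has_child (Vf i) (rf i) (pf i) v) \/
     (v = rf i /\ exists w1 w2, [/\ w1 \in Vf i :\ rf i, w2 \in Vf i :\ rf i, w1 != w2,
                                  pf i w1 = rf i & pf i w2 = rf i])) ->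
  (forall i j, i != j -> Vf i :&: Vf j = S) ->
  (forall i j v w, i != j -> v \in Vf i :\ rf i -> w \in Vf j :\ rf j ->
      [set v; pf i v] != [set w; pf j w]) ->
  (forall i j v w, i != j -> v \in Vf i :\ rf i -> w \in Vf j :\ rf j ->
      pf i v != pf j w) ->
  has_ci_family G S k.
Proof.
move=> rV parP SV leaf VI EI PI.
exists (fun i => ptree (Vf i) (rf i) (pf i)); split.
  by move=> i; apply: (ptree_steiner (rV i) (parP i)) => //; apply: leaf.
move=> i j lij; have ij : i != j by apply/eqP => e; rewrite e ltnn in lij.
split => /=.
- apply/setP => f; rewrite !inE; apply/negP => /andP[/imsetP[v vV ->] /imsetP[w wV e]].
  by move: (EI i j v w ij vV wV); rewrite e eqxx.
- exact: VI.
- move=> x1 x2 p q x1S x2S hp hq v vp vq.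
  case: (eqVneq v x1) => [->|v1]; first by left.
  case: (eqVneq v x2) => [->|v2]; first by right.
  exfalso.
  have := path_internal hp vp v1 v2 => /deg_ge2 /existsP[w /andP[wV /eqP pw]].
  have := path_internal hq vq v1 v2 => /deg_ge2 /existsP[w' /andP[wV' /eqP pw']].
  by move: (PI i j w w' ij wV wV'); rewrite pw pw' eqxx.
Qed.


Section Kappa.
Variable T : finType.
Variable G : rel T.

Lemma kappa_lb (S : {set T}) k : has_ci_family G S k -> k < (2 ^ #|T|).+1 ->
  k <= kappa_star G S.
Proof.
move=> hk lk; rewrite /kappa_star.
rewrite (bigD1 (Ordinal lk)) //=; apply: leq_trans (leq_maxl _ _).
by case: excluded_middle_informative.
Qed.

Lemma kappa_ub (S : {set T}) m : (forall k, has_ci_family G S k -> k <= m) ->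
  kappa_star G S <= m.
Proof.
move=> h; rewrite /kappa_star; apply: (big_ind (fun x => x <= m)) => //.
  by move=> x y hx hy; rewrite geq_max hx hy.
move=> i _.
by case: excluded_middle_informative => [p|_] //; exact: h p.
Qed.

Hypothesis Gsym : symmetric G.
Hypothesis Girr : irreflexive G.

Lemma ci_deg (S : {set T}) k v w : has_ci_family G S k -> v \in S -> w \in S -> v != w ->
  k <= #|[set u | G v u]|.
Proof.
move=> [F [st ci]] vS wS vw.
have ex : forall i, exists u, ([set v; u] \in (F i).2) && G v u.
  move=> i; case: (st i) => [[Ge _ _ con _] SV _].
  have := con v w (subsetP SV v vS) (subsetP SV w wS) => /connectP[p pth wl].
  case: p pth wl => [|u p] /=; first by move=> _ e; rewrite e eqxx in vw.
  move=> /andP[a _] _; exists u; rewrite /sg_adj in a; rewrite a /=.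
  case: (Ge _ a) => x [y [Gxy e]].
  have xy : x != y by apply/eqP => exy; rewrite exy Girr in Gxy.
  have : v \in [set x; y] by rewrite -e set21.
  rewrite !inE => /orP[]/eqP vx.
  + have : y \in [set v; u] by rewrite e set22.
    case/set2P => [yv|<-]; first by move: xy; rewrite yv vx eqxx.
    by rewrite vx.
  + have : x \in [set v; u] by rewrite e set21.
    case/set2P => [xv|<-]; first by move: xy; rewrite xv vx eqxx.
    by rewrite Gsym vx.
pose f i := odflt v [pick u | [set v; u] \in (F i).2 & G v u].
have fP i : [set v; f i] \in (F i).2 /\ G v (f i).
  rewrite /f; case: pickP => [u /andP[h1 h2] //|/= none].
  by exfalso; case: (ex i) => u; rewrite none.
have finj : injective f.
  move=> i j e; apply/eqP; apply/negP => /negP ij.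
  have := fP i; have := fP j; rewrite e => -[h1 _] [h2 _].
  case: (ltngtP i j) => [lij|lji|/val_inj eij]; last by rewrite eij eqxx in ij.
  + case: (ci i j lij) => E _ _.
    have : [set v; f j] \in (F i).2 :&: (F j).2 by rewrite inE h1 h2.
    by rewrite E inE.
  + case: (ci j i lji) => E _ _.
    have : [set v; f j] \in (F j).2 :&: (F i).2 by rewrite inE h1 h2.
    by rewrite E inE.
rewrite -{1}(card_ord k) -cardsT -(card_imset _ finj).
apply: subset_leq_card; apply/subsetP => u /imsetP[i _ ->].
by rewrite inE; case: (fP i).
Qed.
End Kappa.


Lemma star_family (T : finType) (G : rel T) (S : {set T}) k (rt : 'I_k -> T) :
  injective rt -> (forall i, rt i \notin S) -> (forall i v, v \in S -> G v (rt i)) ->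
  1 < #|S| -> has_ci_family G S k.
Proof.
move=> rinj rS Gr S2.
apply: (@ptree_family T G S k (fun i => rt i |: S) rt (fun i _ => rt i)
          (fun i v => v != rt i)).
- by move=> i; rewrite setU11.
- move=> i v; rewrite !inE => /orP[/eqP->|vS]; first by rewrite eqxx.
  by move=> vr; split; [rewrite eqxx | exact: Gr | rewrite eqxx vr].
- by move=> i; apply: subsetUr.
- move=> i v; rewrite !inE => /orP[/eqP-> _|vS]; last by rewrite vS.
  right; split=> //; case/card_gt1P: S2 => x [y [xS yS xy]].
  have xr : x != rt i by apply: contraNneq (rS i) => <-.
  have yr : y != rt i by apply: contraNneq (rS i) => <-.
  by exists x, y; rewrite !in_setD1 !inE xS yS xr yr !orbT.
- move=> i j ij; apply/setP => v; rewrite !inE.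
  case: (boolP (v \in S)) => vS; first by rewrite !orbT.
  rewrite !orbF; apply/negP => /andP[/eqP e1 /eqP e2].
  by move: ij; rewrite -(inj_eq rinj) -e1 -e2 eqxx.
- move=> i j v w ij; rewrite !in_setD1 !inE => /andP[vr /orP[/eqP e|vS]];
    first by rewrite e eqxx in vr.
  move=> /andP[wr /orP[/eqP e|wS]]; first by rewrite e eqxx in wr.
  apply/negP => /eqP e; have : rt i \in [set w; rt j] by rewrite -e set22.
  case/set2P => [e1|e1]; first by move: (rS i); rewrite e1 wS.
  by move: ij; rewrite (rinj _ _ e1) eqxx.
- by move=> i j v w ij _ _; rewrite (inj_eq rinj).
Qed.

Section Kbip.
Variables m1 m2 : nat.
Local Notation T := ('I_m1 + 'I_m2)%type.
Local Notation G := (@kbip m1 m2).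

Lemma kbip_sym : symmetric G.
Proof. by case=> x [y|y] /=. Qed.
Lemma kbip_irr : irreflexive G.
Proof. by case. Qed.

Lemma card_nbr_r (y : 'I_m2) : #|[set u | G (inr y) u]| = m1.
Proof.
have -> : [set u | G (inr y) u] = [set inl x | x in 'I_m1].
  apply/setP => -[x|x]; rewrite !inE /=.
  - by apply/esym/imsetP; exists x.
  - by apply/esym/imsetP => -[z _].
by rewrite card_imset ?card_ord //; move=> a b [].
Qed.

Lemma card_nbr_l (x : 'I_m1) : #|[set u | G (inl x) u]| = m2.
Proof.
have -> : [set u | G (inl x) u] = [set inr y | y in 'I_m2].
  apply/setP => -[z|z]; rewrite !inE /=.
  - by apply/esym/imsetP => -[w _].
  - by apply/esym/imsetP; exists z.
by rewrite card_imset ?card_ord //; move=> a b [].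
Qed.
End Kbip.


Section Enum.
Variables (U : finType) (A : {set U}) (d : U).
Definition en j := nth d (enum A) j.
Lemma en_in j : j < #|A| -> en j \in A.
Proof. by move=> h; rewrite -mem_enum mem_nth // -cardE. Qed.
Lemma en_inj i j : i < #|A| -> j < #|A| -> en i = en j -> i = j.
Proof.
move=> hi hj e; apply/eqP; rewrite -(nth_uniq d _ _ (enum_uniq A)) -?cardE //.
by apply/eqP.
Qed.
Lemma en_index j : j < #|A| -> index (en j) (enum A) = j.
Proof. by move=> h; rewrite /en index_uniq // ?enum_uniq // -cardE. Qed.
End Enum.

Section Scheme.
Variables (m1 m2 : nat) (S : {set ('I_m1 + 'I_m2)%type}) (dx : 'I_m1) (dy : 'I_m2).
Local Notation T := ('I_m1 + 'I_m2)%type.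
Local Notation G := (@kbip m1 m2).

Definition SX := [set x | inl x \in S].
Definition SY := [set y | inr y \in S].
Local Notation a := #|SX|.
Local Notation b := #|SY|.
Local Notation fx := #|~: SX|.
Local Notation fy := #|~: SY|.
Definition sx := en SX dx.
Definition sy := en SY dy.
Definition fxv := en (~: SX) dx.
Definition fyv := en (~: SY) dy.

Variables (dbl : bool) (nfx nfy k : nat).
Hypotheses (a1 : 0 < a) (b1 : 0 < b) (nfxP : nfx <= fx) (nfyP : nfy <= fy).
Hypothesis hXa : (if dbl then (k - nfx).*2 else k - nfx) <= a.
Hypothesis hYb : (if dbl then (k - nfy).*2 else k - nfy) <= b.
Hypothesis C3 : ~~ dbl -> forall i j, i < k -> j < k -> nfx <= i -> nfy <= j -> i = j.
Hypothesis C4 : ~~ dbl -> forall i, i < k -> nfx <= i -> i < nfy -> 1 < a.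
Hypothesis C5 : ~~ dbl -> forall i, i < k -> nfy <= i -> i < nfx -> 1 < b.

Definition xidx i (t : bool) := if dbl then (i - nfx).*2 + ~~ t else i - nfx.
Definition yidx i (t : bool) := if dbl then (i - nfy).*2 + ~~ t else i - nfy.
Definition hx i t : 'I_m1 := if i < nfx then fxv i else sx (xidx i t).
Definition hy i t : 'I_m2 := if i < nfy then fyv i else sy (yidx i t).

Definition ty (v : T) : bool :=
  match v with inl x => ~~ odd (index x (enum SX)) | inr y => ~~ odd (index y (enum SY)) end.
Definition tau i (v : T) := if v \in S then ty v else (v == inr (hy i true)).
Definition par i (v : T) : T :=
  match v with inl _ => inr (hy i (~~ tau i v)) | inr _ => inl (hx i (tau i v)) end.
Definition Vs i := S :|: [set inl (hx i true); inl (hx i false); inr (hy i true); inr (hy i false)].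
Definition rt i : T := inl (hx i true).
Definition rk i (v : T) :=
  if v == inl (hx i true) then 0 else if v == inr (hy i true) then 1
  else if v == inl (hx i false) then 2 else if v == inr (hy i false) then 3 else 4.

Lemma xidx_lt i t : i < k -> nfx <= i -> xidx i t < a.
Proof. move=> ik hi; have := hXa; rewrite /xidx; case: dbl => /=; case: t => /=; lia. Qed.
Lemma yidx_lt i t : i < k -> nfy <= i -> yidx i t < b.
Proof. move=> ik hi; have := hYb; rewrite /yidx; case: dbl => /=; case: t => /=; lia. Qed.

Lemma hx_inS i t : i < k -> (inl (hx i t) \in S) = (nfx <= i).
Proof.
move=> ik; rewrite /hx; case: ltnP => h.
- have : fxv i \in ~: SX by apply: en_in; lia.
  by rewrite !inE => /negbTE ->.
- have : sx (xidx i t) \in SX by apply: en_in; apply: xidx_lt.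
  by rewrite inE.
Qed.
Lemma hy_inS i t : i < k -> (inr (hy i t) \in S) = (nfy <= i).
Proof.
move=> ik; rewrite /hy; case: ltnP => h.
- have : fyv i \in ~: SY by apply: en_in; lia.
  by rewrite !inE => /negbTE ->.
- have : sy (yidx i t) \in SY by apply: en_in; apply: yidx_lt.
  by rewrite inE.
Qed.

Lemma hx_const i t t' : ~~ dbl || (i < nfx) -> hx i t = hx i t'.
Proof. by rewrite /hx /xidx; case: dbl; case: ltnP. Qed.
Lemma hy_const i t t' : ~~ dbl || (i < nfy) -> hy i t = hy i t'.
Proof. by rewrite /hy /yidx; case: dbl; case: ltnP. Qed.

Lemma hx_inj i j t t' : i < k -> j < k -> hx i t = hx j t' ->
  i = j /\ (dbl -> nfx <= i -> t = t').
Proof.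
move=> ik jk e.
have := hx_inS t ik; have := hx_inS t' jk; rewrite e => ->.
move: e; rewrite /hx; case: (ltnP i nfx) => hi; case: (ltnP j nfx) => hj //=; try lia.
- move=> e _; split; last lia.
  by apply: (en_inj (A := ~: SX)) e; lia.
- move=> e _; have := en_inj (xidx_lt t ik hi) (xidx_lt t' jk hj) e.
  clear e.
  rewrite /xidx; case: dbl; case: t; case: t' => /=; split; lia.
Qed.
Lemma hy_inj i j t t' : i < k -> j < k -> hy i t = hy j t' ->
  i = j /\ (dbl -> nfy <= i -> t = t').
Proof.
move=> ik jk e.
have := hy_inS t ik; have := hy_inS t' jk; rewrite e => ->.
move: e; rewrite /hy; case: (ltnP i nfy) => hi; case: (ltnP j nfy) => hj //=; try lia.
- move=> e _; split; last lia.
  by apply: (en_inj (A := ~: SY)) e; lia.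
- move=> e _; have := en_inj (yidx_lt t ik hi) (yidx_lt t' jk hj) e.
  clear e.
  rewrite /yidx; case: dbl; case: t; case: t' => /=; split; lia.
Qed.

Lemma ty_hx i t : dbl -> i < k -> nfx <= i -> ty (inl (hx i t)) = t.
Proof.
move=> d ik hi; rewrite /= /hx ltnNge hi /= /sx en_index ?xidx_lt //.
by rewrite /xidx d oddD odd_double; case: t.
Qed.
Lemma ty_hy i t : dbl -> i < k -> nfy <= i -> ty (inr (hy i t)) = t.
Proof.
move=> d ik hi; rewrite /= /hy ltnNge hi /= /sy en_index ?yidx_lt //.
by rewrite /yidx d oddD odd_double; case: t.
Qed.


Lemma rk_hx i t : rk i (inl (hx i t)) <= 2.
Proof. rewrite /rk; case: t; first by rewrite eqxx. by case: ifP => //; rewrite eqxx. Qed.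
Lemma rk_hy i t : rk i (inr (hy i t)) <= 3.
Proof. rewrite /rk /=; case: t; first by rewrite eqxx. by case: ifP => //; rewrite eqxx. Qed.
Lemma rk_par_le i v : rk i (par i v) <= 3.
Proof. case: v => v /=; [exact: rk_hy | exact: leq_trans (rk_hx _ _) _]. Qed.

Lemma par_in i v : par i v \in Vs i.
Proof. by case: v => v; rewrite /par; [case: (~~ tau i _) | case: (tau i _)]; rewrite !inE eqxx ?orbT. Qed.

Lemma par_G i v : G v (par i v).
Proof. by case: v. Qed.

Lemma rk_par i v : i < k -> v != rt i -> rk i (par i v) < rk i v.
Proof.
move=> ik vr; rewrite {2}/rk (negbTE vr).
case: (eqVneq v (inr (hy i true))) => [ev|_].
  rewrite ev /= /rk; suff -> : hx i (tau i (inr (hy i true))) = hx i true by rewrite eqxx.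
  rewrite /tau hy_inS //; case: (leqP nfy i) => h /=; last by rewrite eqxx.
  case: (boolP dbl) => d; first by have := ty_hy true d ik h; rewrite /= => ->.
  by apply: hx_const; rewrite d.
case: (eqVneq v (inl (hx i false))) => [ev|_].
  have ne : hx i false != hx i true by apply: contraNneq vr => e; rewrite ev e.
  have [d hi] : dbl /\ nfx <= i.
    case: (boolP dbl) => d; last by rewrite (@hx_const i false true) ?d ?eqxx in ne.
    case: (leqP nfx i) => // hi; by rewrite (@hx_const i false true) ?hi ?orbT ?eqxx in ne.
  rewrite ev /= /tau hx_inS // hi ty_hx //= /rk /=.
  by rewrite eqxx.
case: (eqVneq v (inr (hy i false))) => [ev|_].
  by rewrite ev /=; exact: leq_ltn_trans (rk_hx _ _) _.
exact: leq_ltn_trans (rk_par_le _ _) _.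
Qed.

Lemma Vs_cases i v : v \in Vs i ->
  [\/ v \in S, exists t, v = inl (hx i t) | exists t, v = inr (hy i t)].
Proof.
rewrite !inE => /orP[vS|]; first by apply: Or31.
rewrite -!orbA => /or4P[] /eqP->; [apply: Or32; exists true | apply: Or32; exists false
  | apply: Or33; exists true | apply: Or33; exists false]; done.
Qed.

Lemma S_Vs i v : v \in S -> v \in Vs i.
Proof. by rewrite inE => ->. Qed.

Lemma sy0 : inr (sy 0) \in S.
Proof. by have := en_in dy b1; rewrite inE. Qed.
Lemma sx0 : inl (sx 0) \in S.
Proof. by have := en_in dx a1; rewrite inE. Qed.

Lemma leafP i v : i < k -> v \in Vs i -> v \notin S ->
  (v != rt i /\ has_child (Vs i) (rt i) (par i) v) \/
  (v = rt i /\ exists w1 w2, [/\ w1 \in Vs i :\ rt i, w2 \in Vs i :\ rt i, w1 != w2,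
                                  par i w1 = rt i & par i w2 = rt i]).
Proof.
move=> ik vV vS; case: (Vs_cases vV) => [vS'|[t ev]|[t ev]]; first by rewrite vS' in vS.
- have hi : i < nfx by move: vS; rewrite ev hx_inS // ltnNge.
  right; split; first by rewrite ev /rt (@hx_const i t true) // hi orbT.
  have parY y : par i (inr y) = rt i by rewrite /= /rt (@hx_const i _ true) // hi orbT.
  have [w2 [w2V w2ne w2Y]] : exists y, [/\ inr y \in Vs i, y != sy 0 & true].
    case: (ltnP i nfy) => hj.
    + exists (hy i true); split => //; first by rewrite !inE eqxx !orbT.
      apply: contraTneq sy0 => <-; by rewrite hy_inS // leqNgt hj.
    + have b2 : 1 < b.
        case: (boolP dbl) => d; last exact: (C5 d ik hj hi).
        by move: hYb; rewrite d; lia.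
      exists (sy 1); split => //.
      * by apply: S_Vs; have := en_in dy b2; rewrite inE.
      * by apply/eqP => /(en_inj b2 b1).
  exists (inr w2), (inr (sy 0)); split => //; rewrite ?in_setD1 ?w2V ?S_Vs ?sy0 //.
- have hi : i < nfy by move: vS; rewrite ev hy_inS // ltnNge.
  left; split; first by rewrite ev.
  have [x [xV xr]] : exists x, inl x \in Vs i /\ inl x != rt i.
    case: (ltnP i nfx) => hj.
    + exists (sx 0); split; first by apply: S_Vs; apply: sx0.
      apply: contraTneq sx0 => ->; by rewrite /rt hx_inS // leqNgt hj.
    + case: (boolP dbl) => d.
      * exists (hx i false); split; first by rewrite !inE eqxx !orbT.
        apply/eqP => -[/(hx_inj ik ik)] [_ /(_ d hj)].
        done.
      * have a2 := C4 d ik hj hi.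
        have sx1 : inl (sx 1) \in S by have := en_in dx a2; rewrite inE.
        case: (eqVneq (inl (sx 0) : T) (rt i)) => e.
        -- exists (sx 1); split; first by apply: S_Vs.
           rewrite -e; apply/eqP => -[/(en_inj a2 a1)].
           done.
        -- by exists (sx 0); split => //; apply: S_Vs; apply: sx0.
  apply/existsP; exists (inl x); rewrite in_setD1 xr xV /= ev.
  by rewrite (@hy_const i _ t) // hi orbT.
Qed.

Lemma VI i j : i < k -> j < k -> i != j -> Vs i :&: Vs j = S.
Proof.
move=> ik jk ij; apply/setP => v; rewrite inE.
case: (boolP (v \in S)) => vS; first by rewrite !S_Vs.
apply/negP => /andP[vi vj].
case: (Vs_cases vi) => [|[t ev]|[t ev]]; first by rewrite (negbTE vS).
- case: (Vs_cases vj) => [|[t' ev']|[t' ev']]; first by rewrite (negbTE vS).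
  + by move: ev'; rewrite ev => -[/(hx_inj ik jk)] [e _]; rewrite e eqxx in ij.
  + by rewrite ev in ev'.
- case: (Vs_cases vj) => [|[t' ev']|[t' ev']]; first by rewrite (negbTE vS).
  + by rewrite ev in ev'.
  + by move: ev'; rewrite ev => -[/(hy_inj ik jk)] [e _]; rewrite e eqxx in ij.
Qed.

Lemma PI i j v w : i < k -> j < k -> i != j -> par i v != par j w.
Proof.
move=> ik jk ij; apply/eqP; case: v => v; case: w => w //= => -[e].
- by have [e' _] := hy_inj ik jk e; rewrite e' eqxx in ij.
- by have [e' _] := hx_inj ik jk e; rewrite e' eqxx in ij.
Qed.

Lemma par_side i v : par i v != v.
Proof. by case: v. Qed.

Lemma EI i j v w : i < k -> j < k -> i != j -> v \in Vs i -> w \in Vs j ->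
  [set v; par i v] != [set w; par j w].
Proof.
move=> ik jk ij vV wV; apply/negP => /eqP E.
have inj x : x \in [set w; par j w] -> x \in Vs j.
  by case/set2P => ->; rewrite ?par_in.
have pS : par i v \in S.
  by rewrite -(VI ik jk ij) inE par_in inj // -E set22.
have vS : v \in S by rewrite -(VI ik jk ij) inE vV inj // -E set21.
have : v \in [set w; par j w] by rewrite -E set21.
case/set2P => [ewv|evp].
  have : par i v \in [set w; par j w] by rewrite -E set22.
  case/set2P => [e|e]; first by move: (@par_side i v); rewrite e ewv eqxx.
  by move: (@PI i j v w ik jk ij); rewrite e eqxx.
have : w \in [set v; par i v] by rewrite E set21.
case/set2P => [e|ewp]; first by move: (@par_side j w); rewrite -evp e eqxx.
have wS : w \in S by rewrite ewp.
clear E inj pS.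
case: v evp ewp vS vV => [x|y] evp ewp vS vV; subst w.
- have tx : tau i (inl x) = ty (inl x) by rewrite /tau vS.
  move: wS evp; rewrite /= tx => wS.
  have hi : nfy <= i by rewrite -(@hy_inS i (~~ ty (inl x)) ik).
  rewrite /tau wS => -[ex].
  have hj : nfx <= j by rewrite -(@hx_inS j (ty (inr (hy i (~~ ty (inl x))))) jk) -ex.
  case: (boolP dbl) => d; last by move: (C3 d jk ik hj hi) => e; rewrite e eqxx in ij.
  have e1 := ty_hy (~~ ty (inl x)) d ik hi.
  have e2 := ty_hx (ty (inr (hy i (~~ ty (inl x))))) d jk hj.
  rewrite -ex e1 in e2; by case: (ty (inl x)) e2.
- have ty' : tau i (inr y) = ty (inr y) by rewrite /tau vS.
  move: wS evp; rewrite /= ty' => wS.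
  have hi : nfx <= i by rewrite -(@hx_inS i (ty (inr y)) ik).
  rewrite /tau wS => -[ey].
  have hj : nfy <= j by rewrite -(@hy_inS j (~~ ty (inl (hx i (ty (inr y))))) jk) -ey.
  case: (boolP dbl) => d; last by move: (C3 d ik jk hi hj) => e; rewrite e eqxx in ij.
  have e1 := ty_hx (ty (inr y)) d ik hi.
  have e2 := ty_hy (~~ ty (inl (hx i (ty (inr y))))) d jk hj.
  rewrite -ey e1 in e2; by case: (ty (inr y)) e2.
Qed.

Lemma scheme_family : has_ci_family G S k.
Proof.
apply: (@ptree_family T G S k (fun i => Vs i) (fun i => rt i) (fun i => par i)
          (fun i => rk i)).
- by move=> i; rewrite /rt !inE eqxx !orbT.
- by move=> i v vV vr; split; [exact: par_in | exact: par_G | exact: rk_par].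
- by move=> i; apply: subsetUl.
- by move=> i v; apply: leafP.
- by move=> i j ij; apply: VI.
- move=> i j v w ij; rewrite !in_setD1 => /andP[_ vV] /andP[_ wV].
  exact: EI.
- by move=> i j v w ij _ _; apply: PI.
Qed.

End Scheme.


Section Final.
Variables (m1 m2 : nat).
Local Notation T := ('I_m1 + 'I_m2)%type.
Local Notation G := (@kbip m1 m2).

Lemma cardT_sum : #|{: T}| = m1 + m2.
Proof. by rewrite card_sum !card_ord. Qed.

Lemma cardS_split (S : {set T}) : #|S| = #|SX S| + #|SY S|.
Proof.
rewrite -(cardsID (partX m1 m2) S).
have -> : S :&: (partX m1 m2) = inl @: SX S.
  apply/setP => -[x|y]; rewrite !inE /=.
  - by rewrite andbT; apply/idP/imsetP => [h|[z]]; [exists x; rewrite ?inE | rewrite inE => h [->]].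
  - by rewrite andbF; apply/esym/imsetP => -[z].
have -> : S :\: (partX m1 m2) = inr @: SY S.
  apply/setP => -[x|y]; rewrite !inE /=.
  - by apply/esym/imsetP => -[z].
  - by apply/idP/imsetP => [h|[z]]; [exists y; rewrite ?inE | rewrite inE => h [->]].
by rewrite !card_imset //; move=> u v [].
Qed.

Lemma cardSXC (S : {set T}) : #|~: SX S| = m1 - #|SX S|.
Proof. have := cardsC (SX S); rewrite card_ord => e; lia. Qed.
Lemma cardSYC (S : {set T}) : #|~: SY S| = m2 - #|SY S|.
Proof. have := cardsC (SY S); rewrite card_ord => e; lia. Qed.
Lemma cardSX_le (S : {set T}) : #|SX S| <= m1.
Proof. have := cardsC (SX S); rewrite card_ord => e; lia. Qed.
Lemma cardSY_le (S : {set T}) : #|SY S| <= m2.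
Proof. have := cardsC (SY S); rewrite card_ord => e; lia. Qed.

Lemma small_k k : k <= m1 + m2 -> k < (2 ^ #|{: T}|).+1.
Proof.
move=> h; rewrite cardT_sum ltnS; apply: leq_trans h _.
exact: ltnW (ltn_expl _ (leqnn 2)).
Qed.

Lemma lbX (S : {set T}) : S \subset partX m1 m2 -> 1 < #|S| -> m2 <= kappa_star G S.
Proof.
move=> sub S2; apply: kappa_lb; last by apply: small_k; rewrite leq_addl.
apply: (@star_family _ G S m2 (fun i => inr i)).
- by move=> u v [].
- by move=> i; apply/negP => /(subsetP sub); rewrite inE.
- by move=> i [x|y] // /(subsetP sub); rewrite inE.
- done.
Qed.

Lemma lbY (S : {set T}) : SX S = set0 -> 1 < #|S| -> m1 <= kappa_star G S.
Proof.
move=> e S2; apply: kappa_lb; last by apply: small_k; rewrite leq_addr.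
apply: (@star_family _ G S m1 (fun i => inl i)).
- by move=> u v [].
- move=> i; apply/negP => h; have : i \in SX S by rewrite inE.
  by rewrite e inE.
- move=> i [x|y] // h; have : x \in SX S by rewrite inE.
  by rewrite e inE.
- done.
Qed.

Lemma ub_deg (S : {set T}) v m : v \in S -> 1 < #|S| -> #|[set u | G v u]| = m ->
  kappa_star G S <= m.
Proof.
move=> vS S2 cm; apply: kappa_ub => k hk.
case/card_gt1P: S2 => x [y [xS yS xy]].
have [w [wS wv]] : exists w, w \in S /\ v != w.
  case: (eqVneq v x) => [e|ne]; last by exists x.
  by exists y; rewrite e.
rewrite -cm; exact: (ci_deg (@kbip_sym m1 m2) (@kbip_irr m1 m2) hk vS wS wv).
Qed.

Lemma use_scheme (S : {set T}) (dx : 'I_m1) (dy : 'I_m2) :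
  0 < #|SX S| -> 0 < #|SY S| -> forall dbl nfx nfy k,
    nfx <= #|~: SX S| -> nfy <= #|~: SY S| ->
    (if dbl then (k - nfx).*2 else k - nfx) <= #|SX S| ->
    (if dbl then (k - nfy).*2 else k - nfy) <= #|SY S| ->
    (~~ dbl -> forall i j, i < k -> j < k -> nfx <= i -> nfy <= j -> i = j) ->
    (~~ dbl -> forall i, i < k -> nfx <= i -> i < nfy -> 1 < #|SX S|) ->
    (~~ dbl -> forall i, i < k -> nfy <= i -> i < nfx -> 1 < #|SY S|) ->
    k <= m1 + m2 -> k <= kappa_star G S.
Proof.
move=> a1 b1 dbl nfx nfy k h1 h2 h3 h4 h5 h6 h7 h8.
apply: kappa_lb; last exact: small_k.
exact: (@scheme_family m1 m2 S dx dy dbl nfx nfy k a1 b1 h1 h2 h3 h4 h5 h6 h7).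
Qed.

Lemma lb_mixed (S : {set T}) (dx : 'I_m1) (dy : 'I_m2) :
  0 < #|SX S| -> 0 < #|SY S| -> m1 <= m2 -> m2 - m1 + 3 <= #|S| ->
  3 * m1 <= 3 * kappa_star G S + (m1 + #|S| - m2 + 2).
Proof.
move=> a1 b1 m12 hs.
have ea := cardSXC S; have eb := cardSYC S.
have la := cardSX_le S; have lb := cardSY_le S.
have es := cardS_split S.
have use := @use_scheme S dx dy a1 b1.
move: use a1 b1 ea eb la lb es hs.
set a := #|SX S|; set b := #|SY S|; set fx := #|~: SX S|; set fy := #|~: SY S|.
move=> use a1 b1 ea eb la lb es hs.
case: (leqP fx fy) => hf.
- case: (leqP a (2 * (fy - fx) + 2)) => hr.
  + have := @use false fx (fx + minn a (fy - fx)) (fx + minn a (fy - fx)).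
    move=> /(_ (leqnn _)) h; have := h ltac:(lia) ltac:(simpl; lia) ltac:(simpl; lia).
    move=> /(_ ltac:(move=> _ i j ik jk hi hj; lia)).
    move=> /(_ ltac:(move=> _ i ik hi hj; lia)).
    move=> /(_ ltac:(move=> _ i ik hi hj; lia)).
    move=> /(_ ltac:(lia)) hk; lia.
  + pose k := minn (fx + a %/ 2) (fy + b %/ 2).
    have := @use true (minn fx k) (minn fy k) k ltac:(lia) ltac:(lia) ltac:(simpl; lia)
      ltac:(simpl; lia) (fun h => False_rect _ (notF h)) (fun h => False_rect _ (notF h))
      (fun h => False_rect _ (notF h)) ltac:(lia).
    move=> hk; lia.
- case: (leqP a (fx - fy + 2)) => hr.
  + have := @use false fx fy fx (leqnn _) (leqnn _) ltac:(simpl; lia) ltac:(simpl; lia).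
    move=> /(_ ltac:(move=> _ i j ik jk hi hj; lia)).
    move=> /(_ ltac:(move=> _ i ik hi hj; lia)).
    move=> /(_ ltac:(move=> _ i ik hi hj; lia)).
    move=> /(_ ltac:(lia)) hk; lia.
  + pose k := minn (fx + a %/ 2) (fy + b %/ 2).
    have := @use true (minn fx k) (minn fy k) k ltac:(lia) ltac:(lia) ltac:(simpl; lia)
      ltac:(simpl; lia) (fun h => False_rect _ (notF h)) (fun h => False_rect _ (notF h))
      (fun h => False_rect _ (notF h)) ltac:(lia).
    move=> hk; lia.
Qed.

End Final.


Unset Implicit Arguments. Set Strict Implicit.

Theorem corollary3p8 (m1 m2 s : nat) :
  (2 <= m1)%N -> (m1 <= m2)%N -> (2 <= s)%N ->
  [/\ ((s <= m2 - m1 + 2)%N ->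
        forall S : {set ('I_m1 + 'I_m2)%type},
          #|S| = s -> ~~ (S \subset @partX m1 m2) ->
          kappa_star (@kbip m1 m2) S = m1),
      ((s <= m1)%N ->
        forall S : {set ('I_m1 + 'I_m2)%type},
          S \subset @partX m1 m2 -> #|S| = s ->
          kappa_star (@kbip m1 m2) S = m2) &
      ((m2 - m1 + 3 <= s)%N -> (s <= m1 + m2)%N ->
        (m1%:R - (m1 + s - m2 + 2)%:R / 3%:R <=
           (kappa_s (@kbip m1 m2) s)%:R :> rat)%R)].
Proof.
move=> h1 h12 hs2.
have m1p : (0 < m1)%N by lia.
have m2p : (0 < m2)%N by lia.
pose dx := Ordinal m1p; pose dy := Ordinal m2p.
split.
- move=> hs S cS nsub.
  have S2 : (1 < #|S|)%N by rewrite cS.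
  case/subsetPn: nsub => v vS; case: v vS => [x|y] vS; first by rewrite inE.
  move=> _; apply/eqP; rewrite eqn_leq; apply/andP; split.
    exact: (ub_deg vS S2 (card_nbr_r m1 y)).
  case: (eqVneq (SX S) set0) => e; first exact: lbY e S2.
  have a1 : (0 < #|SX S|)%N by rewrite card_gt0.
  have b1 : (0 < #|SY S|)%N by apply/card_gt0P; exists y; rewrite inE.
  have ea := cardSXC S; have eb := cardSYC S.
  have la := cardSX_le S; have lb := cardSY_le S.
  have es := cardS_split S.
  have use := @use_scheme m1 m2 S dx dy a1 b1 false.
  move: use a1 b1 ea eb la lb es.
  set a := #|SX S|; set b := #|SY S|; set fx := #|~: SX S|; set fy := #|~: SY S|.
  move=> use a1 b1 ea eb la lb es.
  case: (ltnP 1 a) => ha.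
  + by apply: (use (m1 - a) m1 m1); rewrite /=; try (intros _; intros); lia.
  + by apply: (use (m1 - a) (m1 - 1) m1); rewrite /=; try (intros _; intros); lia.
- move=> hs S sub cS.
  have S2 : (1 < #|S|)%N by rewrite cS.
  have [v vS] : exists v, v \in S.
    by case/card_gt1P: S2 => x [y [xS _ _]]; exists x.
  have := subsetP sub v vS; case: v vS => [x|y] vS; last by rewrite inE.
  move=> _; apply/eqP; rewrite eqn_leq; apply/andP; split.
    exact: (ub_deg vS S2 (card_nbr_l m2 x)).
  exact: lbX sub S2.
- move=> h3 h4.
  set c := (m1 + s - m2 + 2)%N.
  suff hn : (3 * m1 <= 3 * kappa_s (@kbip m1 m2) s + c)%N.
    have : ((3 * m1)%:R <= (3 * kappa_s (@kbip m1 m2) s + c)%:R :> rat)%R by rewrite ler_nat.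
    rewrite natrD !natrM => h'; lra.
  rewrite /kappa_s; apply: (big_ind (fun x => 3 * m1 <= 3 * x + c)%N).
  + have := ltn_expl (m1 + m2) (leqnn 2); rewrite cardT_sum; lia.
  + move=> x y hx hy /=; lia.
  + move=> S /eqP cS.
    have S2 : (1 < #|S|)%N by rewrite cS.
    case: (eqVneq (SY S) set0) => eY.
      have sub : S \subset partX m1 m2.
        apply/subsetP => -[x|y] vS; rewrite inE //.
        have : y \in SY S by rewrite inE.
        by rewrite eY inE.
      have := lbX sub S2; lia.
    case: (eqVneq (SX S) set0) => eX.
      have := lbY eX S2; lia.
    have := @lb_mixed m1 m2 S dx dy; rewrite card_gt0 eX card_gt0 eY cS.
    move=> /(_ isT isT h12 h3); lia.
Qed.
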